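(* Let $\gamma:\mathrm{Cl}(V,h)\to\mathrm{End}_\mathbb{C}(S)$ be a weakly-faithful complex Clifford representation. Then the complex Lipschitz group $\mathrm{L}_\gamma$ is canonically isomorphic to the automorphism group of $\gamma$ in the category $\mathrm{\mathbb{C}lRep}_w$, via $(\varphi_0,\varphi)\mapsto\varphi$. In particular, the isomorphism class of the group $\mathrm{L}_\gamma$ depends only on the isomorphism class of $\gamma$ in $\mathrm{\mathbb{C}lRep}_w$.
   Context: $(V,h)$ is a finite-dimensional real vector space with non-degenerate symmetric bilinear form, $\mathrm{Cl}(V,h)$ its real Clifford algebra; an isometry $\varphi_0$ induces the unital algebra morphism $\mathrm{Cl}(\varphi_0)$ extending it. A complex Clifford representation is a unital real-algebra morphism $\gamma:\mathrm{Cl}(V,h)\to\mathrm{End}_\mathbb{C}(S)$, $S$ a finite-dimensional complex vector space; weakly-faithful means $\gamma|_V$ injective. A morphism of complex Clifford representations $\gamma\to\gamma'$ (with $\gamma':\mathrm{Cl}(V',h')\to\mathrm{End}_\mathbb{C}(S')$) is a pair $(\varphi_0,\varphi)$, $\varphi_0:(V,h)\to(V',h')$ an isometry and $\varphi:S\to S'$ $\mathbb{C}$-linear, with $\gamma'(\mathrm{Cl}(\varphi_0)(x))\circ\varphi=\varphi\circ\gamma(x)$ for all $x$; composition is componentwise. $\mathrm{\mathbb{C}lRep}_w$ is the category of weakly-faithful complex Clifford representations with these morphisms; an automorphism of $\gamma$ is an isomorphism $\gamma\to\gamma$ (with $\varphi_0\in\mathrm{O}(V,h)$ not necessarily the identity).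 The complex Lipschitz group is $\mathrm{L}_\gamma=\{\varphi\in\mathrm{Aut}_\mathbb{C}(S)\,|\,\varphi\gamma(V)\varphi^{-1}=\gamma(V)\}$. *)

(* Defs.v *)
From HB Require Import structures.
From mathcomp Require Import all_boot all_order all_algebra.
From mathcomp Require Import reals.
From mathcomp Require Import complex.
Set Implicit Arguments. Unset Strict Implicit. Unset Printing Implicit Defensive.
Import Order.TTheory GRing.Theory Num.Theory.
Local Open Scope ring_scope.

Section CliffordDefs.
Variable R : realType.
Local Notation C := (R[i]).

Definition bform n (H : 'M[R]_n) (u v : 'rV[R]_n) : R := (u *m H *m v^T) 0 0.

Definition nondeg_sym_form n (H : 'M[R]_n) : Prop := H^T = H /\ H \in unitmx.

Definition rlinear n n' (f : 'rV[R]_n -> 'rV[R]_n') : Prop :=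
  forall (a : R) u v, f (a *: u + v) = a *: f u + f v.

Definition isometry n n' (H : 'M[R]_n) (H' : 'M[R]_n') (f : 'rV[R]_n -> 'rV[R]_n') : Prop :=
  rlinear f /\ forall u v, bform H' (f u) (f v) = bform H u v.

(* A unital real-algebra morphism gamma : Cl(V,h) -> End_C(S), S = C^m (column vectors),
   is given (universal property of Cl(V,h)) by its restriction g to V: an R-linear map
   with g(v)^2 = h(v,v) 1 (Clifford relation v.v = h(v,v) in Cl(V,h)). *)
Definition clifford_map n (H : 'M[R]_n) m (g : 'rV[R]_n -> 'M[C]_m) : Prop :=
  (forall (a : R) u v, g (a *: u + v) = (a%:C)%C *: g u + g v) /\
  (forall v, g v *m g v = ((bform H v v)%:C)%C%:M).

(* Elements of Cl(V,h): finite real combinations sum_j c_j v_{j,1} ... v_{j,k_j}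
   of products of vectors (these exhaust Cl(V,h)). *)
Definition cl_elt n := seq (R * seq 'rV[R]_n).

Definition word_img n m (g : 'rV[R]_n -> 'M[C]_m) (w : seq 'rV[R]_n) : 'M[C]_m :=
  foldr (fun v A => g v *m A) 1%:M w.

Definition gamma_ext n m (g : 'rV[R]_n -> 'M[C]_m) (x : cl_elt n) : 'M[C]_m :=
  \sum_(t <- x) ((t.1)%:C)%C *: word_img g t.2.

Definition cl_map n n' (f : 'rV[R]_n -> 'rV[R]_n') (x : cl_elt n) : cl_elt n' :=
  map (fun t => (t.1, map f t.2)) x.

Definition weakly_faithful n m (g : 'rV[R]_n -> 'M[C]_m) : Prop := injective g.

Definition cl_morphism n (H : 'M[R]_n) m (g : 'rV[R]_n -> 'M[C]_m)
    n' (H' : 'M[R]_n') m' (g' : 'rV[R]_n' -> 'M[C]_m')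
    (f : 'rV[R]_n -> 'rV[R]_n') (phi : 'M[C]_(m', m)) : Prop :=
  isometry H H' f /\
  forall x : cl_elt n, gamma_ext g' (cl_map f x) *m phi = phi *m gamma_ext g x.

Definition cl_iso n (H : 'M[R]_n) m (g : 'rV[R]_n -> 'M[C]_m)
    n' (H' : 'M[R]_n') m' (g' : 'rV[R]_n' -> 'M[C]_m')
    (f : 'rV[R]_n -> 'rV[R]_n') (phi : 'M[C]_(m', m)) : Prop :=
  cl_morphism H g H' g' f phi /\
  exists (f' : 'rV[R]_n' -> 'rV[R]_n) (phi' : 'M[C]_(m, m')),
    [/\ cl_morphism H' g' H g f' phi',
        (forall v, f' (f v) = v), (forall v, f (f' v) = v),
        phi' *m phi = 1%:M & phi *m phi' = 1%:M].

Definition cl_aut n (H : 'M[R]_n) m (g : 'rV[R]_n -> 'M[C]_m)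
    (f : 'rV[R]_n -> 'rV[R]_n) (phi : 'M[C]_m) : Prop :=
  cl_iso H g H g f phi.

Definition lipschitz n m (g : 'rV[R]_n -> 'M[C]_m) (phi : 'M[C]_m) : Prop :=
  phi \in unitmx /\
  (forall v, exists w, phi *m g v *m invmx phi = g w) /\
  (forall w, exists v, phi *m g v *m invmx phi = g w).

End CliffordDefs.

(* Main.v *)
Require Import Defs.
From HB Require Import structures.
From mathcomp Require Import all_boot all_order all_algebra.
From mathcomp Require Import reals.
From mathcomp Require Import complex.
From mathcomp Require Import ring.
Import Order.TTheory GRing.Theory Num.Theory.
Local Open Scope ring_scope.

Section Aux.
Variable R : realType.
Local Notation C := (R[i]).

Lemma word_morph {n m n' m'} {g : 'rV[R]_n -> 'M[C]_m} {g' : 'rV[R]_n' -> 'M[C]_m'}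
  {f} {phi : 'M[C]_(m', m)} :
  (forall v, g' (f v) *m phi = phi *m g v) ->
  forall w, word_img g' (map f w) *m phi = phi *m word_img g w.
Proof.
move=> hv; elim=> [|v w IH] /=; first by rewrite mul1mx mulmx1.
by rewrite -mulmxA IH !mulmxA hv.
Qed.

Lemma vec_morph n (H : 'M[R]_n) m (g : 'rV[R]_n -> 'M[C]_m)
  n' (H' : 'M[R]_n') m' (g' : 'rV[R]_n' -> 'M[C]_m') f (phi : 'M[C]_(m', m)) :
  Defs.isometry H H' f -> (forall v, g' (f v) *m phi = phi *m g v) ->
  cl_morphism H g H' g' f phi.
Proof.
move=> hi hv; split=> // x; rewrite /gamma_ext /cl_map big_map.
elim: x => [|t x IH]; first by rewrite !big_nil mul0mx mulmx0.
rewrite !big_cons /= mulmxDl mulmxDr IH -scalemxAl -scalemxAr.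
by rewrite (word_morph hv t.2).
Qed.

Lemma morph_vec n (H : 'M[R]_n) m (g : 'rV[R]_n -> 'M[C]_m)
  n' (H' : 'M[R]_n') m' (g' : 'rV[R]_n' -> 'M[C]_m') f (phi : 'M[C]_(m', m)) :
  cl_morphism H g H' g' f phi -> forall v, g' (f v) *m phi = phi *m g v.
Proof.
move=> [_ hx] v; have := hx [:: (1, [:: v])].
by rewrite /gamma_ext /cl_map /= !big_seq1 /= !scale1r !mulmx1.
Qed.

Lemma iso_comp n (H : 'M[R]_n) n1 (H1 : 'M[R]_n1) n2 (H2 : 'M[R]_n2) f1 f2 :
  Defs.isometry H H1 f1 -> Defs.isometry H1 H2 f2 -> Defs.isometry H H2 (f2 \o f1).
Proof.
move=> [l1 b1] [l2 b2]; split=> [a u v|u v] /=; first by rewrite l1 l2.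
by rewrite b2 b1.
Qed.

Lemma iso_inv n (H : 'M[R]_n) n1 (H1 : 'M[R]_n1) f f' :
  Defs.isometry H H1 f -> (forall v, f' (f v) = v) -> (forall w, f (f' w) = w) ->
  Defs.isometry H1 H f'.
Proof.
move=> [l b] h1 h2; split=> [a u v|u v].
  by rewrite -{1}(h2 u) -{1}(h2 v) -l h1.
by rewrite -b !h2.
Qed.

Lemma bformDl n (H : 'M[R]_n) u v w : bform H (u + v) w = bform H u w + bform H v w.
Proof. by rewrite /bform !mulmxDl mxE. Qed.
Lemma bformDr n (H : 'M[R]_n) u v w : bform H w (u + v) = bform H w u + bform H w v.
Proof. by rewrite /bform raddfD /= mulmxDr mxE. Qed.
Lemma bformC n (H : 'M[R]_n) u v : H^T = H -> bform H v u = bform H u v.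
Proof.
move=> hs; rewrite /bform.
have -> : (u *m H *m v^T) 0 0 = ((u *m H *m v^T)^T) 0 0 by rewrite [RHS]mxE.
by rewrite !trmx_mul trmxK hs mulmxA.
Qed.

Lemma polar n (H : 'M[R]_n) u v : H^T = H ->
  bform H u v *+ 2 = bform H (u + v) (u + v) - bform H u u - bform H v v.
Proof.
move=> hs; rewrite !bformDl !bformDr (bformC _ H u v hs).
rewrite mulr2n; set a := bform H u u; set b := bform H v v; set c := bform H u v.
ring.
Qed.

Lemma conj_lip n m n' m' (g : 'rV[R]_n -> 'M[C]_m) (g' : 'rV[R]_n' -> 'M[C]_m')
  f0 f0' (psi : 'M[C]_(m', m)) (psi' : 'M[C]_(m, m')) :
  psi' *m psi = 1%:M -> psi *m psi' = 1%:M -> (forall w, f0 (f0' w) = w) ->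
  (forall u, g' (f0 u) *m psi = psi *m g u) ->
  forall p, lipschitz g p -> lipschitz g' (psi *m p *m psi').
Proof.
move=> e1 e2 hf hv p [pu [h1 h2]].
have hg u : g' (f0 u) = psi *m g u *m psi'.
  by rewrite -hv -mulmxA e2 mulmx1.
have hg' w : g' w = psi *m g (f0' w) *m psi' by rewrite -hg hf.
have hinv : (psi *m p *m psi') *m (psi *m invmx p *m psi') = 1%:M.
  rewrite !mulmxA -(mulmxA _ psi') e1 mulmx1 -(mulmxA _ p) mulmxV // mulmx1.
  by rewrite e2.
have [u _] := mulmx1_unit hinv.
rewrite /lipschitz.
have -> : invmx (psi *m p *m psi') = psi *m invmx p *m psi'.
  by rewrite -[LHS]mulmx1 -hinv mulKmx.
have key q : psi *m p *m psi' *m (psi *m q *m psi') *m (psi *m invmx p *m psi')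
   = psi *m (p *m q *m invmx p) *m psi'.
  by rewrite !mulmxA -!(mulmxA _ psi' psi) e1 !mulmx1.
split=> //; split.
  move=> v; rewrite hg' key; have [w hw] := h1 (f0' v).
  by exists (f0 w); rewrite hw hg.
move=> w; have [v hv'] := h2 (f0' w); exists (f0 v).
by rewrite hg key hv' hg'.
Qed.


Arguments morph_vec {n H m g n' H' m' g' f phi}.
Arguments vec_morph {n H m g n' H' m' g' f phi}.
Arguments iso_comp {n H n1 H1 n2 H2 f1 f2}.
Arguments iso_inv {n H n1 H1 f f'}.
Arguments conj_lip {n m n' m' g g' f0 f0' psi psi'}.

Lemma aut_facts n (H : 'M[R]_n) m (g : 'rV[R]_n -> 'M[C]_m) f phi :
  cl_aut H g f phi ->
  [/\ phi \in unitmx, forall v, g (f v) *m phi = phi *m g v &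
      exists f', [/\ forall v, g (f' v) *m invmx phi = invmx phi *m g v,
         Defs.isometry H H f', (forall v, f' (f v) = v) & (forall v, f (f' v) = v)]].
Proof.
move=> [hm [f' [phi' [hm' h1 h2 e1 e2]]]].
have [u _] := mulmx1_unit e2.
have ei : phi' = invmx phi by rewrite -[phi'](mulKmx u) e2 mulmx1.
split=> //; first exact: morph_vec hm.
exists f'; split=> //; last exact: hm'.1.
by rewrite -ei; apply: morph_vec hm'.
Qed.

Lemma aut_lip n (H : 'M[R]_n) m (g : 'rV[R]_n -> 'M[C]_m) f phi :
  cl_aut H g f phi -> lipschitz g phi.
Proof.
move=> /aut_facts [u hv [f' [_ _ _ h2]]].
have e v : phi *m g v *m invmx phi = g (f v) by rewrite -hv mulmxK.
split=> //; split=> [v|w]; first by exists (f v).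
by exists (f' w); rewrite e h2.
Qed.

Lemma aut_comp n (H : 'M[R]_n) m (g : 'rV[R]_n -> 'M[C]_m) f1 phi1 f2 phi2 :
  cl_aut H g f1 phi1 -> cl_aut H g f2 phi2 -> cl_aut H g (f1 \o f2) (phi1 *m phi2).
Proof.
move=> [hm1 [f1' [phi1' [hm1' a1 b1 c1 d1]]]] [hm2 [f2' [phi2' [hm2' a2 b2 c2 d2]]]].
have v1 := morph_vec hm1; have v2 := morph_vec hm2.
have v1' := morph_vec hm1'; have v2' := morph_vec hm2'.
split.
  apply: vec_morph; first exact: iso_comp hm2.1 hm1.1.
  by move=> v /=; rewrite mulmxA v1 -mulmxA v2 mulmxA.
exists (f2' \o f1'), (phi2' *m phi1'); split.
- apply: vec_morph; first exact: iso_comp hm1'.1 hm2'.1.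
  by move=> v /=; rewrite mulmxA v2' -mulmxA v1' mulmxA.
- by move=> v /=; rewrite a1 a2.
- by move=> v /=; rewrite b2 b1.
- by rewrite mulmxA -(mulmxA phi2') c1 mulmx1 c2.
- by rewrite mulmxA -(mulmxA phi1) d2 mulmx1 d1.
Qed.

Lemma aut_inj n (H : 'M[R]_n) m (g : 'rV[R]_n -> 'M[C]_m) f1 f2 phi :
  weakly_faithful g -> cl_aut H g f1 phi -> cl_aut H g f2 phi -> forall v, f1 v = f2 v.
Proof.
move=> hw /aut_facts [u hv1 _] /aut_facts [_ hv2 _] v; apply: hw.
by rewrite -[g (f1 v)](mulmxK u) -[g (f2 v)](mulmxK u) hv1 hv2.
Qed.

Lemma lip_aut n (H : 'M[R]_n) m (g : 'rV[R]_n -> 'M[C]_m) phi :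
  nondeg_sym_form H -> clifford_map H g -> weakly_faithful g ->
  lipschitz g phi -> exists f, cl_aut H g f phi.
Proof.
move=> [hs _] [hl hq] hw [u [h1 h2]].
have ex v : exists w, (fun w => phi *m g v *m invmx phi == g w) w.
  by have [w e] := h1 v; exists w; apply/eqP.
have ex' w : exists v, (fun v => phi *m g v *m invmx phi == g w) v.
  by have [v e] := h2 w; exists v; apply/eqP.
pose f v := xchoose (ex v).
pose f' w := xchoose (ex' w).
have hf v : phi *m g v *m invmx phi = g (f v) by apply/eqP; exact: (xchooseP (ex v)).
have hf' w : phi *m g (f' w) *m invmx phi = g w by apply/eqP; exact: (xchooseP (ex' w)).
clearbody f f'.
have cinj A B : phi *m A *m invmx phi = phi *m B *m invmx phi -> A = B.
  by move/(congr1 (mulmx^~ phi)); rewrite !mulmxKV // => /(congr1 (mulmx (invmx phi))); rewrite !mulKmx.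
have hff' w : f (f' w) = w by apply: hw; rewrite -hf hf'.
have hf'f v : f' (f v) = v by apply: hw; apply: cinj; rewrite hf' hf.
have hv v : g (f v) *m phi = phi *m g v by rewrite -hf mulmxKV.
have hlf : rlinear f.
  move=> a x y; apply: hw; apply: esym.
  have := hf (a *: x + y).
  by rewrite hl mulmxDr mulmxDl -scalemxAr -scalemxAl !hf -hl.
have hadd x y : f (x + y) = f x + f y by have := hlf 1 x y; rewrite !scale1r.
have hQ v : bform H (f v) (f v) = bform H v v.
  case: (posnP m) => [m0|mpos].
    have e : forall A B : 'M[C]_m, A = B.
      by rewrite m0 => A B; rewrite [A]flatmx0 [B]flatmx0.
    by rewrite (hw _ _ (e (g (f v)) (g v))).
  have : g (f v) *m g (f v) = phi *m (g v *m g v) *m invmx phi.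
    have e : g (f v) *m g (f v) *m phi = phi *m (g v *m g v) by rewrite -mulmxA hv mulmxA hv mulmxA.
    by rewrite -[LHS](mulmxK u) e.
  rewrite !hq scalar_mxC mulmxK //.
  move/matrixP/(_ (Ordinal mpos) (Ordinal mpos)); rewrite !mxE eqxx /= !mulr1n.
  by case.
have hiso : Defs.isometry H H f.
  split=> // x y; apply: (mulIf (x := 2%:R)); first by rewrite pnatr_eq0.
  by rewrite /= !mulr_natr !polar // -hadd !hQ.
exists f; split; first by apply: vec_morph.
exists f', (invmx phi); split => //.
- apply: vec_morph; first exact: iso_inv hiso hf'f hff'.
  by move=> w; rewrite -(hf' w) mulmxA mulKmx.
- exact: mulVmx.
- exact: mulmxV.
Qed.

End Aux.
Arguments morph_vec {R n H m g n' H' m' g' f phi}.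
Arguments conj_lip {R n m n' m' g g' f0 f0' psi psi'}.

Theorem proposition3p12 (R : realType) (n : nat) (H : 'M[R]_n) (m : nat)
    (g : 'rV[R]_n -> 'M[R[i]]_m)
    (hH : nondeg_sym_form H) (hg : clifford_map H g) (hw : weakly_faithful g) :
  (* Aut(gamma) -> L_gamma, (phi0, phi) |-> phi, is well defined, *)
  (forall f phi, cl_aut H g f phi -> lipschitz g phi) /\
  (* a homomorphism for componentwise composition, *)
  (forall f1 phi1 f2 phi2, cl_aut H g f1 phi1 -> cl_aut H g f2 phi2 ->
     cl_aut H g (f1 \o f2) (phi1 *m phi2)) /\
  (* injective, *)
  (forall f1 f2 phi, cl_aut H g f1 phi -> cl_aut H g f2 phi -> forall v, f1 v = f2 v) /\
  (* and surjective onto L_gamma; *)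
  (forall phi, lipschitz g phi -> exists f, cl_aut H g f phi) /\
  (* in particular, isomorphic representations have isomorphic Lipschitz groups. *)
  (forall (n' : nat) (H' : 'M[R]_n') (m' : nat) (g' : 'rV[R]_n' -> 'M[R[i]]_m'),
     nondeg_sym_form H' -> clifford_map H' g' -> weakly_faithful g' ->
     (exists f (phi : 'M[R[i]]_(m', m)), cl_iso H g H' g' f phi) ->
     exists F : 'M[R[i]]_m -> 'M[R[i]]_m',
       [/\ (forall p, lipschitz g p -> lipschitz g' (F p)),
           (forall p q, lipschitz g p -> lipschitz g q -> F (p *m q) = F p *m F q),
           (forall p q, lipschitz g p -> lipschitz g q -> F p = F q -> p = q) &
           (forall p', lipschitz g' p' -> exists p, lipschitz g p /\ F p = p')]).
Proof.
split; first exact: aut_lip.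
split; first exact: aut_comp.
split; first by move=> f1 f2 phi; apply: aut_inj.
split; first by move=> phi; apply: lip_aut.
move=> n' H' m' g' _ _ _ [f0 [psi [hm [f0' [psi' [hm' a b e1 e2]]]]]].
have v := morph_vec hm; have v' := morph_vec hm'.
exists (fun p => psi *m p *m psi'); split.
- by move=> p /=; exact: (conj_lip e1 e2 b v p).
- move=> p q _ _; by rewrite !mulmxA -(mulmxA _ psi' psi) e1 mulmx1.
- have key X : psi' *m (psi *m X *m psi') *m psi = X.
    by rewrite !mulmxA e1 mul1mx -mulmxA e1 mulmx1.
  by move=> p q _ _ /= e; rewrite -(key p) e key.
- move=> p' hp; exists (psi' *m p' *m psi); split.
    exact: conj_lip e2 e1 a v' p' hp.
  by rewrite !mulmxA e2 mul1mx -!mulmxA e2 !mulmx1.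
Qed.
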